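(* If the matrix $i\begin{pmatrix}\langle U_\alpha,\bar U_{\bar\beta}\rangle&\langle U_\alpha,V\rangle\\ \langle\bar V,\bar U_{\bar\beta}\rangle&\langle\bar V,V\rangle\end{pmatrix}$ is positive definite, then the $(n+1)\times(n+1)$ matrix $\begin{pmatrix}\mathcal{D}_\alpha X^I&\bar X^I\end{pmatrix}$ (columns indexed by $\alpha=1,\dots,n$ and one extra column) is invertible.
   Context: $V=\begin{pmatrix}X^I\\ F_I\end{pmatrix}$ ($I=0,\dots,n$) over an $n$-dimensional Kähler manifold with coordinates $z^\alpha$ and Kähler potential $K$; $U_\alpha=\mathcal{D}_\alpha V=\begin{pmatrix}\mathcal{D}_\alpha X^I\\ \mathcal{D}_\alpha F_I\end{pmatrix}$ with $\mathcal{D}_\alpha V=\partial_\alpha V+\tfrac12(\partial_\alpha K)V$, and $\bar U_{\bar\alpha}$ its complex conjugate; $\langle A,B\rangle=A^T\Omega B$ with $\Omega=\begin{pmatrix}0&\mathbb{1}\\-\mathbb{1}&0\end{pmatrix}$. *)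

(* Defs.v *)
From HB Require Import structures.
From mathcomp Require Import all_boot all_order all_algebra.
Set Implicit Arguments. Unset Strict Implicit. Unset Printing Implicit Defensive.
Import Order.TTheory GRing.Theory Num.Theory.
Local Open Scope ring_scope.

(* A symplectic vector (X^I, F_I), I = 0..m-1, stored as a pair of columns. *)
Definition svec (C : numClosedFieldType) (m : nat) : Type :=
  ('cV[C]_m * 'cV[C]_m)%type.

(* <A, B> = A^T Omega B with Omega = [[0, 1], [-1, 0]] *)
Definition sympl (C : numClosedFieldType) (m : nat) (A B : svec C m) : C :=
  \sum_(i < m) (A.1 i 0 * B.2 i 0 - A.2 i 0 * B.1 i 0).

Definition sconj (C : numClosedFieldType) (m : nat) (A : svec C m) : svec C m :=
  (map_mx (@Num.conj C) A.1, map_mx (@Num.conj C) A.2).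

(* The family (U_1, ..., U_n, conj V), indexed by 'I_n.+1, the last index
   (ord_max) corresponding to conj V. *)
Definition Wfam (C : numClosedFieldType) (n : nat)
  (U : 'I_n -> svec C n.+1) (V : svec C n.+1) (a : 'I_n.+1) : svec C n.+1 :=
  match unlift ord_max a with Some al => U al | None => sconj V end.

Definition metric_mx (C : numClosedFieldType) (n : nat)
  (U : 'I_n -> svec C n.+1) (V : svec C n.+1) : 'M[C]_n.+1 :=
  \matrix_(a, b) ('i * sympl (Wfam U V a) (sconj (Wfam U V b))).

(* (D_alpha X^I | conj X^I): rows indexed by I, columns by alpha and one extra *)
Definition X_mx (C : numClosedFieldType) (n : nat)
  (U : 'I_n -> svec C n.+1) (V : svec C n.+1) : 'M[C]_n.+1 :=
  \matrix_(I, a) (Wfam U V a).1 I 0.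

Definition posdef (C : numClosedFieldType) (m : nat) (M : 'M[C]_m) : Prop :=
  forall x : 'cV[C]_m, x != 0 ->
    0 < (((map_mx (@Num.conj C) x)^T *m M *m x) 0 0).

(* Main.v *)
Require Import Defs.
From mathcomp Require Import all_boot all_order all_algebra.
Import GRing.Theory Num.Theory.
Local Open Scope ring_scope.

Theorem lemma7 (C : numClosedFieldType) (n : nat)
  (U : 'I_n -> svec C n.+1) (V : svec C n.+1) :
  posdef (metric_mx U V) -> X_mx U V \in unitmx.
Proof.
move=> Hpd; rewrite unitmxE unitfE; apply/negP; rewrite -det_tr.
move=> /det0P [v v0 hv].
set W := Wfam U V.
have hZ I : \sum_a v 0 a * (W a).1 I 0 = 0.
  have := congr1 (fun M : 'M[C]_(1, n.+1) => M 0 I) hv; rewrite !mxE => h; apply: (etrans _ h).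
  by apply: eq_bigr => a _; rewrite !mxE.
set x := map_mx (@Num.conj C) v^T.
have x0 : x != 0.
  apply/negP => /eqP hx; move/negP: v0; apply; apply/eqP.
  have -> : v = (map_mx (@Num.conj C) x)^T by rewrite /x map_mxCK trmxK.
  by rewrite hx map_mx0 trmx0.
have := Hpd x x0.
set Q := fun I => \sum_a v 0 a * (W a).2 I 0.
have E1 b : \sum_a v 0 a * ('i * sympl (W a) (sconj (W b)))
    = - 'i * \sum_I Q I * Num.conj ((W b).1 I 0).
  rewrite /sympl.
  under eq_bigr => a _ do rewrite mulrCA big_distrr /=.
  rewrite -big_distrr /= exchange_big /= mulNr -mulrN; congr (_ * _).
  rewrite -sumrN; apply: eq_bigr => I _.
  under eq_bigr => a _ do rewrite !mxE mulrBr !mulrA.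
  rewrite sumrB -!mulr_suml hZ mul0r sub0r /Q.
  by [].
rewrite /x map_mxCK trmxK !mxE.
have -> : \sum_b (v *m metric_mx U V) 0 b * (map_mx (@Num.conj C) v^T) b 0 = 0.
  rewrite (eq_bigr (fun b => (- 'i * \sum_I Q I * Num.conj ((W b).1 I 0))
      * Num.conj (v 0 b))); last first.
    move=> b _; rewrite -E1 !mxE; congr (_ * _).
    by apply: eq_bigr => a _; rewrite !mxE.
  under eq_bigr => b _ do rewrite -mulrA big_distrl /=.
  rewrite -big_distrr /= exchange_big /=.
  under eq_bigr => I _ do under eq_bigr => b _ do rewrite -mulrA.
  under eq_bigr => I _ do rewrite -big_distrr /=.
  under eq_bigr => I _.
    have -> : \sum_b Num.conj ((W b).1 I 0) * Num.conj (v 0 b)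
        = Num.conj (\sum_b v 0 b * (W b).1 I 0).
      rewrite rmorph_sum; apply: eq_bigr => b _.
      by rewrite rmorphM mulrC.
    rewrite hZ rmorph0 mulr0; over.
  by rewrite big1 ?mulr0.
by rewrite Order.POrderTheory.ltxx.
Qed.
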